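(* If Algorithm 1 is run for any integer $T\ge\frac{6w}{\alpha\epsilon}$ iterations and $\bar y=\frac1T\sum_{k=0}^{T-1}p(x_k)$, then $\mathbb{E}[\mathbf 1^T\bar y]\le(1+5\epsilon)\,\mathrm{OPT}$.
   Context: Standing setup: $A\in\mathbb{R}^{m\times n}_{\ge 0}$ has no zero column and is normalized so that $\min_{i\in[n]}\|A_{:i}\|_\infty=1$, where $A_{:i}$ denotes the $i$-th column. The packing LP is $\max\{\mathbf 1^Tx: x\ge 0,\ Ax\le \mathbf 1\}$ with optimal value $\mathrm{OPT}$. $\epsilon\in(0,1/2]$. $\log$ is natural unless written $\log_2$. $\mu=\frac{\epsilon}{4\log(nm/\epsilon)}$, $p_j(x)=\exp\big(\frac{1}{\mu}((Ax)_j-1)\big)$, $p(x)=(p_1(x),\dots,p_m(x))$, $f_\mu(x)=-\mathbf 1^Tx+\mu\sum_jp_j(x)$, $\nabla_i f_\mu(x)=-1+\sum_jA_{ji}p_j(x)$. Algorithm 1 with $T$ iterations: set $\alpha=\mu/20$, $w=\lceil\log_2(1/\epsilon)\rceil$, $x_0[i]=\frac{1-\epsilon/2}{n\|A_{:i}\|_\infty}$. For $k=0,\dots,T-1$: choose $t_k\in\{0,\dots,w-1\}$ uniformly at random, independently of the past; writing $g_i=\nabla_i f_\mu(x_k)$, define $\xi_k[i]=0$ if $|g_i|\le\epsilon$, $\xi_k[i]=g_i$ if $\epsilon<|g_i|\le 1$, $\xi_k[i]=1$ if $g_i>1$; $\xi^{(t)}_k[i]=\xi_k[i]$ if $\epsilon2^t<|\xi_k[i]|\le\epsilon2^{t+1}$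 and $0$ otherwise; $x_{k+1}[i]=x_k[i]\exp(-\alpha\,\xi^{(t_k)}_k[i])$. *)

(* Defs.v *)
From Stdlib Require Import Reals Lra ZArith.
Open Scope R_scope.

Fixpoint sumR (f : nat -> R) (k : nat) : R :=
  match k with
  | O => 0
  | S k' => sumR f k' + f k'
  end.

Fixpoint maxR (f : nat -> R) (k : nat) : R :=
  match k with
  | O => 0
  | S k' => Rmax (maxR f k') (f k')
  end.

(* A matrix is a function A j i (row j < m, column i < n); vectors are nat -> R. *)

Definition colnorm (m : nat) (A : nat -> nat -> R) (i : nat) : R :=
  maxR (fun j => Rabs (A j i)) m.

Definition Ax (n : nat) (A : nat -> nat -> R) (x : nat -> R) (j : nat) : R :=
  sumR (fun i => A j i * x i) n.

(* ceiling of a real: ceil x = - floor(-x) = 1 - up(-x) *)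
Definition ceilZ (x : R) : Z := (1 - up (- x))%Z.

Definition log2 (x : R) : R := ln x / ln 2.

Section Alg.
Variables (m n : nat) (A : nat -> nat -> R) (eps : R).

Definition mu : R := eps / (4 * ln (INR n * INR m / eps)).
Definition alpha : R := mu / 20.
Definition wpar : nat := Z.to_nat (ceilZ (log2 (1 / eps))).

Definition pj (x : nat -> R) (j : nat) : R := exp ((1 / mu) * (Ax n A x j - 1)).

Definition grad (x : nat -> R) (i : nat) : R :=
  -1 + sumR (fun j => A j i * pj x j) m.

Definition xi (x : nat -> R) (i : nat) : R :=
  let g := grad x i in
  if Rle_dec (Rabs g) eps then 0
  else if Rle_dec g 1 then g
  else 1.

Definition xit (t : nat) (x : nat -> R) (i : nat) : R :=
  let v := xi x i in
  if Rlt_dec (eps * 2 ^ t) (Rabs v) then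
    (if Rle_dec (Rabs v) (eps * 2 ^ (S t)) then v else 0)
  else 0.

Definition x0 (i : nat) : R := (1 - eps / 2) / (INR n * colnorm m A i).

Definition step (t : nat) (x : nat -> R) (i : nat) : R :=
  x i * exp (- alpha * xit t x i).

Fixpoint iterate (ts : nat -> nat) (k : nat) : nat -> R :=
  match k with
  | O => x0
  | S k' => step (ts k') (iterate ts k')
  end.

Definition ones_ybar (T : nat) (ts : nat -> nat) : R :=
  (1 / INR T) * sumR (fun k => sumR (fun j => pj (iterate ts k) j) m) T.

End Alg.

(* Expectation over t_0, ..., t_{T-1} i.i.d. uniform on {0,...,w-1}.
   expect w T F averages F over all choices of the first T values. *)
Definition shift_cons (t : nat) (ts : nat -> nat) : nat -> nat :=
  fun k => match k with O => t | S k' => ts k' end.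

Fixpoint expect (w T : nat) (F : (nat -> nat) -> R) : R :=
  match T with
  | O => F (fun _ => O)
  | S T' => (1 / INR w) * sumR (fun t => expect w T' (fun ts => F (shift_cons t ts))) w
  end.

Definition feasible (m n : nat) (A : nat -> nat -> R) (x : nat -> R) : Prop :=
  (forall i, (i < n)%nat -> 0 <= x i) /\
  (forall j, (j < m)%nat -> Ax n A x j <= 1).

Definition lp_values (m n : nat) (A : nat -> nat -> R) : R -> Prop :=
  fun r => exists x, feasible m n A x /\ r = sumR x n.

(* Main.v *)
Require Import Defs.
From Stdlib Require Import Reals Lra Lia ZArith.
Open Scope R_scope.

Lemma sumR_ext f g N : (forall k, (k < N)%nat -> f k = g k) -> sumR f N = sumR g N.
Proof. induction N; simpl; intros H; auto. rewrite IHN by (intros; apply H; lia). rewrite H by lia. lra. Qed.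

Lemma sumR_le f g N : (forall k, (k < N)%nat -> f k <= g k) -> sumR f N <= sumR g N.
Proof. induction N; simpl; intros H; [lra|]. assert (H1:=H N ltac:(lia)). assert (sumR f N <= sumR g N) by (apply IHN; intros; apply H; lia). lra. Qed.

Lemma sumR_plus f g N : sumR (fun k => f k + g k) N = sumR f N + sumR g N.
Proof. induction N; simpl; lra. Qed.

Lemma sumR_minus f g N : sumR (fun k => f k - g k) N = sumR f N - sumR g N.
Proof. induction N; simpl; lra. Qed.

Lemma sumR_scal c f N : sumR (fun k => c * f k) N = c * sumR f N.
Proof. induction N; simpl; [lra|]. rewrite IHN. ring. Qed.

Lemma sumR_const c N : sumR (fun _ => c) N = INR N * c.
Proof. induction N; [simpl; lra|]. rewrite S_INR. simpl sumR. rewrite IHN. ring. Qed.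

Lemma sumR_nonneg f N : (forall k, (k < N)%nat -> 0 <= f k) -> 0 <= sumR f N.
Proof. intros H. replace 0 with (sumR (fun _ => 0) N). apply sumR_le; auto.
  rewrite sumR_const; ring. Qed.

Lemma sumR_swap (F : nat -> nat -> R) N M :
  sumR (fun i => sumR (fun j => F i j) M) N = sumR (fun j => sumR (fun i => F i j) N) M.
Proof. induction N; simpl.
  - rewrite sumR_const; ring.
  - rewrite IHN. rewrite <- sumR_plus. reflexivity. Qed.

Lemma sumR_ge_term f N k : (forall k, (k < N)%nat -> 0 <= f k) -> (k < N)%nat -> f k <= sumR f N.
Proof. induction N; intros H Hk; [lia|]. simpl.
  destruct (Nat.eq_dec k N) as [->|Hne].
  - assert (0 <= sumR f N) by (apply sumR_nonneg; intros; apply H; lia). lra.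
  - assert (f k <= sumR f N) by (apply IHN; [intros; apply H; lia | lia]).
    assert (0 <= f N) by (apply H; lia). lra. Qed.

Lemma CS_sum a b N : (forall i, (i < N)%nat -> 0 <= a i) ->
  (sumR (fun i => a i * b i) N)^2 <= sumR a N * sumR (fun i => a i * (b i)^2) N.
Proof. intros Ha.
  set (S := sumR a N). set (D := sumR (fun i => a i * b i) N). set (Q := sumR (fun i => a i * (b i)^2) N).
  assert (Hq : forall t, 0 <= t^2 * Q - 2 * t * D + S).
  { intros t. assert (E: t^2*Q - 2*t*D + S = sumR (fun i => a i * (t * b i - 1)^2) N).
    { unfold Q, D, S. rewrite <- sumR_scal, <- sumR_scal, <- sumR_minus, <- sumR_plus.
      apply sumR_ext; intros; ring. }
    rewrite E. apply sumR_nonneg. intros. apply Rmult_le_pos; [auto|apply pow2_ge_0]. }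
  assert (HQ : 0 <= Q) by (apply sumR_nonneg; intros; apply Rmult_le_pos; [auto|apply pow2_ge_0]).
  destruct (Req_dec Q 0) as [HQ0|HQ0].
  - assert (D = 0).
    { destruct (Req_dec D 0); auto. exfalso. assert (H1 := Hq ((S+1)/(2*D))). rewrite HQ0 in H1.
      replace (((S + 1) / (2 * D)) ^ 2 * 0 - 2 * ((S + 1) / (2 * D)) * D + S) with (-1) in H1 by (field; auto). lra. }
    rewrite H, HQ0. nra.
  - assert (H1 := Hq (D/Q)).
    replace ((D / Q) ^ 2 * Q - 2 * (D / Q) * D + S) with (S - D^2/Q) in H1 by (field; auto).
    assert (0 < Q) by lra.
    assert (H2: D^2/Q <= S) by lra.
    apply (Rmult_le_compat_r Q) in H2; [|lra].
    replace (D^2/Q*Q) with (D^2) in H2 by (field; lra). lra. Qed.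

Lemma maxR_ge f N k : (k < N)%nat -> f k <= maxR f N.
Proof. induction N; intros Hk; [lia|]. simpl. destruct (Nat.eq_dec k N) as [->|].
  - apply Rmax_r. - eapply Rle_trans; [apply IHN; lia| apply Rmax_l]. Qed.

Lemma maxR_nonneg f N : 0 <= maxR f N.
Proof. induction N; simpl; [lra|]. eapply Rle_trans; [apply IHN|apply Rmax_l]. Qed.

Lemma maxR_attain f N : 0 < maxR f N -> exists k, (k < N)%nat /\ f k = maxR f N.
Proof. induction N; simpl; intros H; [lra|].
  unfold Rmax in H |- *. destruct (Rle_dec (maxR f N) (f N)).
  - exists N; split; auto.
  - destruct (IHN H) as [k [Hk E]]. exists k; split; auto. Qed.

Lemma exp_le_mono x y : x <= y -> exp x <= exp y.
Proof. intros H. destruct (Req_dec x y) as [->|]; [lra|]. left; apply exp_increasing; lra. Qed.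

Lemma ln_le_mono x y : 0 < x -> x <= y -> ln x <= ln y.
Proof. intros Hx H. destruct (Req_dec x y) as [->|]; [lra|]. left; apply ln_increasing; lra. Qed.

Lemma ln_le_sub1 x : 0 < x -> ln x <= x - 1.
Proof. intros Hx. assert (H := exp_ineq1_le (ln x)). rewrite exp_ln in H; lra. Qed.

Lemma exp_pos' y : 0 < exp y. Proof. apply exp_pos. Qed.

Lemma exp_upper_neg y : y <= 0 -> exp y <= 1 / (1 - y).
Proof. intros H. assert (H1 := exp_ineq1_le (-y)). rewrite exp_Ropp in H1.
  assert (0 < exp y) by apply exp_pos.
  apply Rmult_le_reg_r with (1 - y); [lra|].
  replace (1/(1-y)*(1-y)) with 1 by (field; lra).
  apply Rmult_le_reg_r with (/ exp y). apply Rinv_0_lt_compat; lra.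
  replace (exp y * (1 - y) * / exp y) with (1 - y) by (field; lra). lra. Qed.

Lemma exp_quad y : y <= 1/4 -> exp y <= 1 + y + y^2.
Proof. intros H. destruct (Rle_dec y 0) as [Hy|Hy].
  - eapply Rle_trans; [apply exp_upper_neg; auto|].
    apply Rmult_le_reg_r with (1 - y); [lra|].
    replace (1/(1-y)*(1-y)) with 1 by (field; lra). nra.
  - replace y with (y/2 + y/2) at 1 by field. rewrite exp_plus.
    assert (H2 := exp_upper_neg (-(y/2)) ltac:(lra)).
    assert (H3 : exp (y/2) * exp (-(y/2)) = 1) by (rewrite <- exp_plus; replace (y/2 + -(y/2)) with 0 by ring; apply exp_0).
    assert (0 < exp (y/2)) by apply exp_pos. assert (0 < exp (-(y/2))) by apply exp_pos.
    assert (H4 : exp (-(y/2)) >= 1 - y/2) by (assert (H5:=exp_ineq1_le (-(y/2))); lra).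
    assert (H6 : exp (y/2) <= 1/(1 - y/2)).
    { apply Rmult_le_reg_r with (1 - y/2); [lra|]. replace (1/(1-y/2)*(1-y/2)) with 1 by (field; lra). nra. }
    assert (H7 : exp (y/2) * exp (y/2) <= 1/(1-y/2) * (1/(1-y/2))).
    { apply Rmult_le_compat; lra. }
    eapply Rle_trans; [apply H7|].
    replace (1/(1-y/2) * (1/(1-y/2))) with (4/((2-y)*(2-y))) by (field; lra).
    apply Rmult_le_reg_r with ((2-y)*(2-y)). nra.
    replace (4 / ((2 - y) * (2 - y)) * ((2 - y) * (2 - y))) with 4 by (field; lra). nra. Qed.

Lemma y_le_exp y : y <= exp y.
Proof. assert (H := exp_ineq1_le y). lra. Qed.

Lemma ln2_ge_half : 1/2 <= ln 2.
Proof. assert (H := exp_ineq1_le (-(1/2))). rewrite exp_Ropp in H.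
  assert (0 < exp (1/2)) by apply exp_pos.
  assert (exp (1/2) <= 2).
  { apply Rmult_le_reg_r with (/exp (1/2)). apply Rinv_0_lt_compat; lra.
    rewrite Rinv_r by lra. lra. }
  rewrite <- (ln_exp (1/2)). apply ln_le_mono; auto. Qed.

Lemma ln4_le_2 : ln 4 <= 2.
Proof. assert (H := exp_ineq1_le 1). rewrite <- (ln_exp 2). apply ln_le_mono; [lra|].
  assert (exp 2 = exp 1 * exp 1) by (rewrite <- exp_plus; f_equal; ring). nra. Qed.

Lemma Rdiv_le_0_compat a b : 0 <= a -> 0 < b -> 0 <= a / b.
Proof. intros. unfold Rdiv. apply Rmult_le_pos; auto. left; apply Rinv_0_lt_compat; auto. Qed.

Section Expect.
Variable w : nat.
Hypothesis Hw : (1 <= w)%nat.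

Lemma INRw_pos : 0 < INR w.
Proof. apply lt_0_INR. lia. Qed.

Lemma expect_ext T F G : (forall ts, F ts = G ts) -> expect w T F = expect w T G.
Proof. revert F G. induction T; intros F G H; simpl; auto.
  f_equal. apply sumR_ext. intros t _. apply IHT. intros. apply H. Qed.

Lemma expect_le T F G : (forall ts, F ts <= G ts) -> expect w T F <= expect w T G.
Proof. revert F G. induction T; intros F G H; simpl; auto.
  apply Rmult_le_compat_l. assert (H1 := INRw_pos). apply Rdiv_le_0_compat; lra.
  apply sumR_le. intros t _. apply IHT. intros. apply H. Qed.

Lemma expect_const T c : expect w T (fun _ => c) = c.
Proof. induction T; simpl; auto. rewrite (sumR_ext _ (fun _ => c)) by auto. rewrite sumR_const.
  assert (H1 := INRw_pos). field. lra. Qed.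

Lemma expect_plus T F G : expect w T (fun ts => F ts + G ts) = expect w T F + expect w T G.
Proof. revert F G. induction T; intros F G; simpl; auto.
  rewrite (sumR_ext _ (fun t => expect w T (fun ts => F (shift_cons t ts)) + expect w T (fun ts => G (shift_cons t ts)))).
  rewrite sumR_plus. ring. intros. apply IHT. Qed.

Lemma expect_scal T c F : expect w T (fun ts => c * F ts) = c * expect w T F.
Proof. revert F. induction T; intros F; simpl; auto.
  rewrite (sumR_ext _ (fun t => c * expect w T (fun ts => F (shift_cons t ts)))).
  rewrite sumR_scal. ring. intros. apply IHT. Qed.

Lemma expect_minus T F G : expect w T (fun ts => F ts - G ts) = expect w T F - expect w T G.
Proof. rewrite (expect_ext _ _ (fun ts => F ts + (-1) * G ts)) by (intros; ring).
  rewrite expect_plus, expect_scal. ring. Qed.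

Lemma expect_sum T (F : nat -> (nat -> nat) -> R) N :
  expect w T (fun ts => sumR (fun k => F k ts) N) = sumR (fun k => expect w T (F k)) N.
Proof. induction N; simpl. apply expect_const. rewrite expect_plus, IHN. auto. Qed.

Variable St : Type.
Variable stepf : nat -> St -> St.
Fixpoint itf (y : St) (ts : nat -> nat) (k : nat) : St :=
  match k with O => y | S k' => stepf (ts k') (itf y ts k') end.

Lemma itf_shift y t ts k : itf y (shift_cons t ts) (S k) = itf (stepf t y) ts k.
Proof. induction k; simpl; auto. simpl in IHk. rewrite IHk. auto. Qed.

Variable Inv : St -> Prop.
Hypothesis Inv_step : forall t y, Inv y -> Inv (stepf t y).
Variables Phi Psi : St -> R.
Hypothesis Hdrift : forall y, Inv y -> (1 / INR w) * sumR (fun t => Phi (stepf t y)) w <= Phi y - Psi y.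

Lemma Inv_itf y ts k : Inv y -> Inv (itf y ts k).
Proof. intros H. induction k; simpl; auto. Qed.

Lemma expect_S T F : expect w (S T) F = (1 / INR w) * sumR (fun t => expect w T (fun ts => F (shift_cons t ts))) w.
Proof. reflexivity. Qed.

Lemma tower k : forall T y, (k < T)%nat -> Inv y ->
  expect w T (fun ts => Phi (itf y ts (S k))) <= expect w T (fun ts => Phi (itf y ts k) - Psi (itf y ts k)).
Proof. induction k; intros T y HT Hy; destruct T as [|T]; try lia.
  - rewrite !expect_S. cbv beta. rewrite (sumR_ext _ (fun t => Phi (stepf t y))).
    2:{ intros t _. simpl. apply expect_const. }
    rewrite (sumR_ext (fun t => expect w T (fun ts => Phi (itf y (shift_cons t ts) 0) - Psi (itf y (shift_cons t ts) 0))) (fun _ => Phi y - Psi y)).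
    2:{ intros t _. simpl. apply expect_const. }
    rewrite sumR_const. assert (H1 := INRw_pos). replace (1 / INR w * (INR w * (Phi y - Psi y))) with (Phi y - Psi y) by (field; lra).
    apply Hdrift; auto.
  - rewrite !expect_S. cbv beta. apply Rmult_le_compat_l. assert (H1 := INRw_pos). apply Rdiv_le_0_compat; lra.
    apply sumR_le. intros t _.
    rewrite (expect_ext _ _ (fun ts => Phi (itf (stepf t y) ts (S k)))) by (intros; rewrite itf_shift; auto).
    rewrite (expect_ext _ (fun ts => Phi (itf y (shift_cons t ts) (S k)) - Psi (itf y (shift_cons t ts) (S k)))
       (fun ts => Phi (itf (stepf t y) ts k) - Psi (itf (stepf t y) ts k))) by (intros; rewrite itf_shift; auto).
    apply IHk; auto. lia. Qed.

Lemma telescope y T N : Inv y -> (N <= T)%nat ->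
  sumR (fun k => expect w T (fun ts => Psi (itf y ts k))) N <=
  expect w T (fun ts => Phi (itf y ts 0)) - expect w T (fun ts => Phi (itf y ts N)).
Proof. intros Hy. induction N; intros HN.
  - simpl. lra.
  - simpl sumR. assert (H1 := IHN ltac:(lia)).
    assert (H2 := tower N T y ltac:(lia) Hy). rewrite expect_minus in H2. lra. Qed.

End Expect.

Section Main.
Variables (m n : nat) (A : nat -> nat -> R) (eps : R).
Hypothesis HA_nonneg : forall j i, (j < m)%nat -> (i < n)%nat -> 0 <= A j i.
Hypothesis HA_nozero : forall i, (i < n)%nat -> exists j, (j < m)%nat /\ A j i <> 0.
Hypothesis HA_norm_ge : forall i, (i < n)%nat -> 1 <= colnorm m A i.
Hypothesis HA_norm_eq : exists i, (i < n)%nat /\ colnorm m A i = 1.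
Hypothesis Heps : 0 < eps <= 1 / 2.
Variable OPT : R.
Hypothesis HOPT : is_lub (lp_values m n A) OPT.

Definition Lv := ln (INR n * INR m / eps).
Local Notation muv := (mu m n eps).
Local Notation al := (alpha m n eps).

Lemma n_pos : (1 <= n)%nat.
Proof. destruct HA_norm_eq as [i [Hi _]]. lia. Qed.
Lemma m_pos : (1 <= m)%nat.
Proof. destruct HA_norm_eq as [i [Hi _]]. destruct (HA_nozero i Hi) as [j [Hj _]]. lia. Qed.
Lemma INRn_ge1 : 1 <= INR n.
Proof. rewrite <- INR_1. apply le_INR. apply n_pos. Qed.
Lemma INRm_ge1 : 1 <= INR m.
Proof. rewrite <- INR_1. apply le_INR. apply m_pos. Qed.

Lemma nm_eps_ge2 : 2 <= INR n * INR m / eps.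
Proof. assert (H1 := INRn_ge1). assert (H2 := INRm_ge1).
  apply Rmult_le_reg_r with eps; [lra|]. unfold Rdiv. rewrite Rmult_assoc, Rinv_l by lra. nra. Qed.

Lemma Lv_ge : 1/2 <= Lv.
Proof. unfold Lv. eapply Rle_trans; [apply ln2_ge_half|]. apply ln_le_mono; [lra|apply nm_eps_ge2]. Qed.

Lemma mu_eq : muv = eps / (4 * Lv).
Proof. reflexivity. Qed.
Lemma mu_pos : 0 < muv.
Proof. rewrite mu_eq. assert (H:=Lv_ge). apply Rdiv_lt_0_compat; lra. Qed.
Lemma mu_le : muv <= eps / 2.
Proof. rewrite mu_eq. assert (H:=Lv_ge). apply Rmult_le_reg_r with (4*Lv); [lra|].
  unfold Rdiv. rewrite Rmult_assoc, Rinv_l by lra. nra. Qed.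
Lemma mu_le4 : muv <= 1/4.
Proof. assert (H:=mu_le). lra. Qed.
Lemma al_eq : al = muv / 20.
Proof. reflexivity. Qed.
Lemma al_pos : 0 < al.
Proof. rewrite al_eq. assert (H:=mu_pos). lra. Qed.
Lemma al_le : al <= eps / 40.
Proof. rewrite al_eq. assert (H:=mu_le). lra. Qed.
Lemma eps_4mu : eps / (4 * muv) = Lv.
Proof. rewrite mu_eq. assert (H:=Lv_ge). field. lra. Qed.
Lemma exp_mLv : exp (- Lv) = eps / (INR n * INR m).
Proof. unfold Lv. rewrite exp_Ropp, exp_ln. 2: assert (H:=nm_eps_ge2); lra.
  assert (H1 := INRn_ge1). assert (H2 := INRm_ge1). field. lra. Qed.

Local Notation w := (wpar eps).

Lemma log2_ge1 : 1 <= log2 (1/eps).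
Proof. unfold log2. assert (H:=ln2_ge_half).
  assert (ln 2 <= ln (1/eps)) by (apply ln_le_mono; [lra|]; apply Rmult_le_reg_r with eps; [lra|];
    unfold Rdiv; rewrite Rmult_assoc, Rinv_l by lra; lra).
  apply Rmult_le_reg_r with (ln 2); [lra|]. unfold Rdiv. rewrite Rmult_assoc, Rinv_l by lra. lra. Qed.

Lemma w_ge_log : log2 (1/eps) <= INR w.
Proof. unfold wpar, ceilZ. set (x := log2 (1/eps)).
  assert (Hx : 1 <= x) by apply log2_ge1.
  destruct (archimed (-x)) as [H1 H2].
  assert (Hc : x <= IZR (1 - up (-x))) by (rewrite minus_IZR; change (IZR 1) with 1; lra).
  assert (Hc0 : (0 <= 1 - up (-x))%Z) by (apply le_IZR; change (IZR 0) with 0; lra).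
  rewrite INR_IZR_INZ, Z2Nat.id by auto. auto. Qed.

Lemma w_ge1 : 1 <= INR w.
Proof. assert (H1:=w_ge_log). assert (H2:=log2_ge1). lra. Qed.

Lemma w_pos : (1 <= w)%nat.
Proof. assert (H:=w_ge1). apply INR_le. simpl. lra. Qed.

Lemma eps_pow_w : 1 <= eps * 2 ^ w.
Proof. assert (H1 := w_ge_log). assert (H2 := ln2_ge_half).
  assert (Hp : 0 < 2 ^ w) by (apply pow_lt; lra).
  assert (H3 : ln (1/eps) <= ln (2 ^ w)).
  { rewrite ln_pow by lra. unfold log2 in H1. apply Rmult_le_reg_r with (/ ln 2). apply Rinv_0_lt_compat; lra.
    rewrite Rmult_assoc, Rinv_r by lra. unfold Rdiv in H1. lra. }
  destruct (Rle_dec (1/eps) (2^w)) as [H|H].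
  - apply Rmult_le_reg_l with (1/eps). apply Rdiv_lt_0_compat; lra.
    replace (1/eps*1) with (1/eps) by ring. replace (1/eps*(eps*2^w)) with (2^w) by (field; lra). auto.
  - exfalso. assert (ln (2^w) < ln (1/eps)) by (apply ln_increasing; lra). lra. Qed.

Definition Bk (v : R) (t : nat) : R :=
  if Rlt_dec (eps * 2 ^ t) (Rabs v) then (if Rle_dec (Rabs v) (eps * 2 ^ (S t)) then v else 0) else 0.

Lemma bucket_low (F : R -> R) v k : eps * 2 ^ k < Rabs v -> sumR (fun t => F (Bk v t)) k = INR k * F 0.
Proof. intros H. rewrite <- sumR_const. apply sumR_ext. intros t Ht. unfold Bk.
  destruct (Rlt_dec _ _); auto. destruct (Rle_dec _ _); auto.
  exfalso. assert (2 ^ (S t) <= 2 ^ k) by (apply Rle_pow; [lra|lia]). nra. Qed.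

Lemma bucket_main (F : R -> R) v k : eps < Rabs v -> Rabs v <= eps * 2 ^ k ->
  sumR (fun t => F (Bk v t)) k = F v + (INR k - 1) * F 0.
Proof. induction k; intros H1 H2.
  - simpl in H2. lra.
  - rewrite S_INR. simpl sumR. destruct (Rle_dec (Rabs v) (eps * 2 ^ k)) as [H|H].
    + rewrite IHk by auto. unfold Bk. destruct (Rlt_dec _ _); [lra|]. ring.
    + rewrite bucket_low by lra. unfold Bk. destruct (Rlt_dec _ _); [|lra].
      destruct (Rle_dec _ _); [|lra]. ring. Qed.

Lemma bucket_zero (F : R -> R) k : sumR (fun t => F (Bk 0 t)) k = F 0 + (INR k - 1) * F 0.
Proof. replace (F 0 + (INR k - 1) * F 0) with (INR k * F 0) by ring. rewrite <- sumR_const.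
  apply sumR_ext. intros. unfold Bk. rewrite Rabs_R0.
  assert (0 < 2 ^ k0) by (apply pow_lt; lra).
  destruct (Rlt_dec _ _); auto. nra. Qed.

Lemma bucket (F : R -> R) v : (v = 0 \/ (eps < Rabs v /\ Rabs v <= 1)) ->
  sumR (fun t => F (Bk v t)) w = F v + (INR w - 1) * F 0.
Proof. intros [->|[H1 H2]]. apply bucket_zero. apply bucket_main; auto.
  assert (H:=eps_pow_w). lra. Qed.

Local Notation pp := (pj m n A eps).
Local Notation gg := (grad m n A eps).
Local Notation xx := (xi m n A eps).
Local Notation xt := (xit m n A eps).
Local Notation stp := (step m n A eps).

Definition PP x := sumR (pp x) m.
Definition XX (x : nat -> R) := sumR x n.
Definition ff x := - XX x + muv * PP x.
Definition SS x := sumR (fun i => x i * xx x i) n.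
Definition QQ x := sumR (fun i => x i * xx x i * gg x i) n.

Lemma pp_pos x j : 0 < pp x j.
Proof. apply exp_pos. Qed.

Lemma PP_nonneg x : 0 <= PP x.
Proof. apply sumR_nonneg. intros. left; apply pp_pos. Qed.

Lemma Ax_eq_ln x j : Ax n A x j = 1 + muv * ln (pp x j).
Proof. unfold pj. rewrite ln_exp. assert (H:=mu_pos). field. lra. Qed.

Lemma grad_ge x i : (i < n)%nat -> -1 <= gg x i.
Proof. intros Hi. unfold grad. assert (0 <= sumR (fun j => A j i * pp x j) m).
  { apply sumR_nonneg. intros j Hj. apply Rmult_le_pos; [apply HA_nonneg; auto| left; apply pp_pos]. }
  lra. Qed.

Lemma xi_cases x i : (i < n)%nat ->
  (Rabs (gg x i) <= eps /\ xx x i = 0) \/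
  (eps < Rabs (gg x i) /\ gg x i <= 1 /\ xx x i = gg x i) \/
  (1 < gg x i /\ xx x i = 1).
Proof. intros Hi. unfold xi. destruct (Rle_dec _ _); [left; auto|].
  destruct (Rle_dec _ _); [right; left; split; [lra|auto] | right; right; split; [lra|auto]]. Qed.

Lemma xi_ok x i : (i < n)%nat -> xx x i = 0 \/ (eps < Rabs (xx x i) /\ Rabs (xx x i) <= 1).
Proof. intros Hi. assert (Hg := grad_ge x i Hi).
  destruct (xi_cases x i Hi) as [[_ ->]|[[H1 [H2 ->]]|[H1 ->]]]; auto.
  - right. split; auto. apply Rabs_le. lra.
  - right. rewrite Rabs_R1. lra. Qed.

Lemma xit_Bk t x i : xt t x i = Bk (xx x i) t.
Proof. reflexivity. Qed.

Lemma xit_cases t x i : xt t x i = 0 \/ xt t x i = xx x i.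
Proof. rewrite xit_Bk. unfold Bk. destruct (Rlt_dec _ _); auto. destruct (Rle_dec _ _); auto. Qed.

Lemma sum_xit (F : R -> R) x i : (i < n)%nat ->
  sumR (fun t => F (xt t x i)) w = F (xx x i) + (INR w - 1) * F 0.
Proof. intros Hi. rewrite <- bucket by (apply xi_ok; auto). apply sumR_ext. intros. rewrite xit_Bk. auto. Qed.

Lemma Ax_swap (c y : nat -> R) :
  sumR (fun j => c j * Ax n A y j) m = sumR (fun i => y i * sumR (fun j => A j i * c j) m) n.
Proof. unfold Ax. transitivity (sumR (fun j => sumR (fun i => c j * (A j i * y i)) n) m).
  { apply sumR_ext. intros. rewrite sumR_scal. auto. }
  rewrite sumR_swap. apply sumR_ext. intros. rewrite <- sumR_scal. apply sumR_ext. intros. ring. Qed.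

Lemma row_bound x j : (1 - eps/4) * pp x j <= pp x j * Ax n A x j + muv * exp (- Lv).
Proof. assert (Hmu := mu_pos). assert (Hp := pp_pos x j). assert (He := exp_pos (-Lv)).
  set (a := Ax n A x j) in *.
  destruct (Rle_dec (1 - eps/4) a) as [H|H].
  - assert (pp x j * (1 - eps/4) <= pp x j * a) by (apply Rmult_le_compat_l; lra). nra.
  - set (y := (1 - eps/4 - a) / muv).
    assert (Hy : 0 < y) by (unfold y; apply Rdiv_lt_0_compat; lra).
    assert (Hpe : pp x j = exp (- Lv) * exp (- y)).
    { unfold pj. rewrite <- exp_plus. f_equal. fold a. unfold y. rewrite <- eps_4mu. field. lra. }
    assert (Hye : y * exp (- y) <= 1).
    { assert (H1 := y_le_exp y). assert (H2 : exp y * exp (-y) = 1) by (rewrite <- exp_plus; replace (y + -y) with 0 by ring; apply exp_0).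
      assert (0 < exp (-y)) by apply exp_pos. nra. }
    assert (E : (1 - eps/4) * pp x j - pp x j * a = muv * exp (-Lv) * (y * exp (-y))).
    { rewrite Hpe. unfold y. field. lra. }
    assert (muv * exp (-Lv) * (y * exp (-y)) <= muv * exp (-Lv) * 1) by (apply Rmult_le_compat_l; [nra|auto]).
    lra. Qed.

Lemma main_pointwise x : (forall i, (i < n)%nat -> 0 <= x i) ->
  (1 - eps/4) * PP x <= (1 + eps) * XX x + SS x + QQ x + eps^2/2.
Proof. intros Hx.
  assert (H1 : (1 - eps/4) * PP x <= sumR (fun j => pp x j * Ax n A x j) m + INR m * (muv * exp (-Lv))).
  { unfold PP. rewrite <- sumR_scal, <- sumR_const, <- sumR_plus. apply sumR_le. intros. apply row_bound. }
  assert (H2 : INR m * (muv * exp (-Lv)) <= eps^2/2).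
  { rewrite exp_mLv. assert (Hn:=INRn_ge1). assert (Hm:=INRm_ge1). assert (Hmu:=mu_pos). assert (Hmu2:=mu_le).
    replace (INR m * (muv * (eps / (INR n * INR m)))) with (muv * eps / INR n) by (field; lra).
    apply Rle_trans with (muv * eps). apply Rmult_le_reg_r with (INR n); [lra|].
    unfold Rdiv. rewrite Rmult_assoc, Rinv_l by lra. assert (0 < muv*eps) by nra. nra. nra. }
  assert (H3 : sumR (fun j => pp x j * Ax n A x j) m = sumR (fun i => x i * (1 + gg x i)) n).
  { rewrite Ax_swap. apply sumR_ext. intros i Hi. unfold grad. f_equal. 
    assert (sumR (fun j => A j i * pp x j) m = sumR (fun j => A j i * pj m n A eps x j) m) by reflexivity. lra. }
  assert (H4 : sumR (fun i => x i * (1 + gg x i)) n <= (1 + eps) * XX x + SS x + QQ x).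
  { unfold XX, SS, QQ. rewrite <- sumR_scal, <- !sumR_plus. apply sumR_le. intros i Hi.
    assert (Hxi := Hx i Hi). assert (Hg := grad_ge x i Hi).
    destruct (xi_cases x i Hi) as [[Ha ->]|[[Ha [Hb ->]]|[Ha ->]]].
    - assert (gg x i <= Rabs (gg x i)) by apply Rle_abs. nra.
    - assert (0 <= gg x i * gg x i) by nra. nra.
    - nra. }
  lra. Qed.

Lemma A_le_col j i : (j < m)%nat -> (i < n)%nat -> A j i <= colnorm m A i.
Proof. intros. unfold colnorm. eapply Rle_trans; [apply Rle_abs|]. apply (maxR_ge (fun j => Rabs (A j i))). auto. Qed.

Lemma col_witness i : (i < n)%nat -> exists j, (j < m)%nat /\ 1 <= A j i.
Proof. intros Hi. assert (H := HA_norm_ge i Hi). unfold colnorm in H.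
  destruct (maxR_attain (fun j => Rabs (A j i)) m ltac:(lra)) as [j [Hj E]].
  exists j. split; auto. rewrite Rabs_pos_eq in E by (apply HA_nonneg; auto). lra. Qed.

Lemma OPT_ub y : feasible m n A y -> sumR y n <= OPT.
Proof. intros Hy. destruct HOPT as [Hub _]. apply Hub. exists y. auto. Qed.

Lemma sumR_delta (c : nat -> R) k N : (k < N)%nat -> sumR (fun i => if Nat.eqb i k then c i else 0) N = c k.
Proof. induction N; intros Hk; [lia|]. simpl sumR. destruct (Nat.eq_dec k N) as [->|Hne].
  - rewrite Nat.eqb_refl. replace (sumR (fun i => if Nat.eqb i N then c i else 0) N) with 0. ring.
    rewrite (sumR_ext _ (fun _ => 0)). rewrite sumR_const; ring. intros i Hi.
    destruct (Nat.eqb_spec i N); [lia|auto].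
  - rewrite IHN by lia. destruct (Nat.eqb_spec N k); [lia|ring]. Qed.

Lemma OPT_ge1 : 1 <= OPT.
Proof. destruct HA_norm_eq as [k [Hk Hc]].
  set (e := fun i => if Nat.eqb i k then 1 else 0).
  assert (He : sumR e n = 1) by (unfold e; apply (sumR_delta (fun _ => 1)); auto).
  rewrite <- He. apply OPT_ub. split.
  - intros i _. unfold e. destruct (Nat.eqb i k); lra.
  - intros j Hj. unfold Ax. rewrite (sumR_ext _ (fun i => if Nat.eqb i k then A j i else 0)).
    + rewrite sumR_delta by auto. rewrite <- Hc. apply A_le_col; auto.
    + intros i _. unfold e. destruct (Nat.eqb i k); ring. Qed.

Lemma K_le : muv * ln (INR n / muv) <= eps.
Proof. assert (HL := Lv_ge). assert (Hmu := mu_pos). assert (Hn:=INRn_ge1). assert (Hm:=INRm_ge1).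
  assert (H1 : INR n / muv <= (INR n * INR m / eps) * (4 * Lv)).
  { rewrite mu_eq. replace (INR n / (eps / (4 * Lv))) with (INR n / eps * (4*Lv)) by (field; lra).
    apply Rmult_le_compat_r; [lra|]. unfold Rdiv. rewrite (Rmult_comm (INR n) (INR m)), Rmult_assoc.
    rewrite <- (Rmult_1_l (INR n * / eps)) at 1. apply Rmult_le_compat_r; [|lra].
    apply Rmult_le_pos; [lra| left; apply Rinv_0_lt_compat; lra]. }
  assert (H0 : 0 < INR n / muv) by (apply Rdiv_lt_0_compat; lra).
  assert (H2 := ln_le_mono _ _ H0 H1).
  rewrite ln_mult in H2 by (assert (H3:=nm_eps_ge2); lra).
  rewrite ln_mult in H2 by lra. fold Lv in H2.
  assert (H4 := ln4_le_2). assert (H5 := ln_le_sub1 Lv ltac:(lra)).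
  assert (H6 : ln (INR n / muv) <= 2 * Lv + 1) by lra.
  apply Rle_trans with (muv * (2 * Lv + 1)). apply Rmult_le_compat_l; lra.
  rewrite mu_eq. apply Rmult_le_reg_r with (4 * Lv); [lra|].
  replace (eps / (4 * Lv) * (2 * Lv + 1) * (4 * Lv)) with (eps * (2 * Lv + 1)) by (field; lra). nra. Qed.

Definition Inv (x : nat -> R) := (forall i, (i < n)%nat -> 0 < x i) /\ ff x <= 0.

Lemma XX_pos x : (forall i, (i < n)%nat -> 0 < x i) -> 0 < XX x.
Proof. intros Hx. assert (H := n_pos). unfold XX.
  apply Rlt_le_trans with (x 0%nat). apply Hx; lia. apply sumR_ge_term; [intros; left; apply Hx; auto | lia]. Qed.

Lemma bound_M x : Inv x -> forall j, (j < m)%nat -> Ax n A x j <= 1 + 4 * eps / 3.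
Proof. intros [Hx Hf]. assert (HX := XX_pos x Hx). set (X := XX x) in *.
  assert (Hmu := mu_pos). assert (Hmu4 := mu_le4). assert (HK := K_le). assert (Hn := INRn_ge1).
  set (R0 := 1 + muv * ln (X / muv)).
  assert (HAx : forall j, (j < m)%nat -> Ax n A x j <= R0).
  { intros j Hj. rewrite Ax_eq_ln. unfold R0. apply Rplus_le_compat_l. apply Rmult_le_compat_l; [lra|].
    apply ln_le_mono; [apply pp_pos|].
    assert (pp x j <= PP x) by (apply sumR_ge_term; auto; intros; left; apply pp_pos).
    unfold ff in Hf. fold X in Hf. apply Rmult_le_reg_l with muv; auto.
    replace (muv * (X / muv)) with X by (field; lra). nra. }
  assert (Hxi : forall i, (i < n)%nat -> x i <= R0).
  { intros i Hi. destruct (col_witness i Hi) as [j [Hj HA]].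
    apply Rle_trans with (Ax n A x j); [|apply HAx; auto].
    apply Rle_trans with (A j i * x i). assert (0 < x i) by auto. nra.
    unfold Ax. apply (sumR_ge_term (fun i => A j i * x i)); auto.
    intros. apply Rmult_le_pos; [apply HA_nonneg; auto | left; apply Hx; auto]. }
  assert (HXn : X <= INR n * R0).
  { unfold X, XX. rewrite <- sumR_const. apply sumR_le. auto. }
  set (Y := X / INR n).
  assert (HY : 0 < Y) by (unfold Y; apply Rdiv_lt_0_compat; lra).
  assert (HYR : Y <= R0) by (unfold Y; apply Rmult_le_reg_r with (INR n); [lra|];
     unfold Rdiv; rewrite Rmult_assoc, Rinv_l by lra; lra).
  assert (Hln : ln (X / muv) = ln (INR n / muv) + ln Y).
  { rewrite <- ln_mult by (try apply Rdiv_lt_0_compat; lra). f_equal. unfold Y. field. lra. }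
  assert (HlnY := ln_le_sub1 Y HY).
  assert (HR0 : R0 <= 1 + muv * ln (INR n / muv) + muv * (Y - 1)).
  { unfold R0. rewrite Hln. assert (muv * ln Y <= muv * (Y - 1)) by (apply Rmult_le_compat_l; lra). lra. }
  set (K := muv * ln (INR n / muv)) in *.
  assert (Hz : (Y - 1) * (1 - muv) <= K) by nra.
  intros j Hj. apply Rle_trans with R0; [apply HAx; auto|].
  destruct (Rle_dec (Y - 1) 0). nra.
  assert (3 * muv * (Y - 1) <= K) by nra. nra. Qed.

Lemma bound_X x : Inv x -> XX x <= (1 + 4 * eps / 3) * OPT.
Proof. intros HI. assert (HM := bound_M x HI). destruct HI as [Hx _].
  set (c := 1 + 4 * eps / 3). assert (Hc : 1 <= c) by (unfold c; lra).
  assert (H : sumR (fun i => x i / c) n <= OPT).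
  { apply OPT_ub. split.
    - intros i Hi. apply Rdiv_le_0_compat; [left; auto | lra].
    - intros j Hj. unfold Ax. rewrite (sumR_ext _ (fun i => / c * (A j i * x i))) by (intros; unfold Rdiv; ring).
      rewrite sumR_scal. fold (Ax n A x j). assert (Ax n A x j <= c) by (apply HM; auto).
      apply Rmult_le_reg_l with c; [lra|]. rewrite <- Rmult_assoc, Rinv_r by lra. lra. }
  rewrite (sumR_ext _ (fun i => / c * x i)) in H by (intros; unfold Rdiv; ring).
  rewrite sumR_scal in H. unfold XX. apply Rmult_le_reg_l with (/ c). apply Rinv_0_lt_compat; lra.
  rewrite <- Rmult_assoc, (Rmult_comm (/c) c), Rinv_r, Rmult_1_l by lra. auto. Qed.

Local Notation xz := (x0 m n A eps).

Lemma x0_pos i : (i < n)%nat -> 0 < xz i.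
Proof. intros Hi. unfold x0. assert (H := HA_norm_ge i Hi). assert (Hn := INRn_ge1).
  apply Rdiv_lt_0_compat; [lra| nra]. Qed.

Lemma Ax_x0 j : (j < m)%nat -> Ax n A xz j <= 1 - eps / 2.
Proof. intros Hj. assert (Hn := INRn_ge1). unfold Ax.
  apply Rle_trans with (sumR (fun _ => (1 - eps/2) / INR n) n).
  - apply sumR_le. intros i Hi. unfold x0. assert (H := HA_norm_ge i Hi). assert (H2 := A_le_col j i Hj Hi).
    assert (H3 := HA_nonneg j i Hj Hi).
    replace (A j i * ((1 - eps / 2) / (INR n * colnorm m A i))) with ((A j i / colnorm m A i) * ((1 - eps/2) / INR n)) by (field; lra).
    rewrite <- (Rmult_1_l ((1 - eps/2)/INR n)) at 2. apply Rmult_le_compat_r.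
    apply Rdiv_le_0_compat; lra.
    apply Rmult_le_reg_r with (colnorm m A i); [lra|]. unfold Rdiv. rewrite Rmult_assoc, Rinv_l by lra. lra.
  - rewrite sumR_const. right. field. lra. Qed.

Lemma x0_feas : XX xz <= OPT.
Proof. apply OPT_ub. split. intros; left; apply x0_pos; auto. intros j Hj. assert (H := Ax_x0 j Hj). lra. Qed.

Lemma ff_x0 : ff xz <= 0.
Proof. unfold ff. destruct HA_norm_eq as [k [Hk Hc]].
  assert (Hn := INRn_ge1). assert (Hm := INRm_ge1). assert (Hmu := mu_pos). assert (Hmu4 := mu_le4).
  assert (HX : (1 - eps/2) / INR n <= XX xz).
  { apply Rle_trans with (xz k). unfold x0. rewrite Hc, Rmult_1_r. lra.
    apply sumR_ge_term; auto. intros; left; apply x0_pos; auto. }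
  assert (HP : PP xz <= INR m * (eps / (INR n * INR m))^2).
  { unfold PP. rewrite <- sumR_const. apply sumR_le. intros j Hj. unfold pj.
    rewrite <- exp_mLv. replace ((exp (- Lv))^2) with (exp (-(2*Lv))) by (simpl; rewrite Rmult_1_r, <- exp_plus; f_equal; ring).
    apply exp_le_mono. rewrite <- eps_4mu. assert (H := Ax_x0 j Hj).
    apply Rle_trans with ((1/muv) * (-(eps/2))). apply Rmult_le_compat_l; [left; apply Rdiv_lt_0_compat; lra| lra].
    right. field. lra. }
  assert (HP2 : muv * PP xz <= (1 - eps/2) / INR n).
  { apply Rle_trans with (muv * (INR m * (eps / (INR n * INR m))^2)). apply Rmult_le_compat_l; lra.
    replace (muv * (INR m * (eps / (INR n * INR m))^2)) with ((muv * eps^2 / (INR n * INR m)) * / INR n) by (field; lra).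
    unfold Rdiv at 2. apply Rmult_le_compat_r. left; apply Rinv_0_lt_compat; lra.
    apply Rle_trans with (muv * eps^2). apply Rmult_le_reg_r with (INR n * INR m). nra.
    unfold Rdiv. rewrite Rmult_assoc, Rinv_l by nra. assert (0 < muv * eps^2) by (apply Rmult_lt_0_compat; nra).
    assert (1 <= INR n * INR m) by nra. nra.
    assert (eps^2 <= 1/4) by nra. assert (0 <= eps^2) by nra. nra. }
  lra. Qed.

Lemma coord_ineq a x v g d : 0 < a -> a <= 1/80 -> 0 <= x -> -1 <= v <= 1 -> 0 <= v*g ->
  v^2*(1+g) <= 2*(v*g) -> 0 <= 1+g -> -(a*v) <= d -> d <= -(a*v) + a^2*v^2 ->
  x*d*g + (5/(3*(20*a)))*(x*d^2*(1+g)) <= -(3/4)*a*(x*v*g).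
Proof. intros Ha Ha2 Hx Hv Hvg Hv2 Hg Hd1 Hd2.
  assert (T1 : d * g <= -(a*v*g) + a^2*(v*g)).
  { destruct (Rle_dec 0 g) as [Hg0|Hg0].
    - assert (d*g <= (-(a*v) + a^2*v^2)*g) by (apply Rmult_le_compat_r; auto).
      assert (v^2*g <= v*g) by (destruct (Rle_dec 0 v); nra). nra.
    - assert (v <= 0) by nra. assert (-(a*v)*g >= d*g) by nra. nra. }
  assert (T2 : d^2 <= a^2*(1+a)^2*v^2).
  { destruct (Rle_dec 0 v) as [Hv0|Hv0].
    - set (B := a*(1+a)*v). assert (0 <= a*v) by nra. assert (0 <= a^2*v) by nra.
      assert (-B <= d) by (unfold B; nra).
      assert (v^2 <= v) by nra. assert (a^2*v^2 <= a^2*v) by (apply Rmult_le_compat_l; nra).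
      assert (d <= B) by (unfold B; nra).
      replace (a^2*(1+a)^2*v^2) with (B^2) by (unfold B; ring). nra.
    - set (B := -(a*(1+a)*v)). assert (a*v <= 0) by nra. assert (a^2*v <= 0) by nra.
      assert (-B <= d) by (unfold B; nra).
      assert (v^2 <= -v) by nra. assert (a^2*v^2 <= a^2*(-v)) by (apply Rmult_le_compat_l; nra).
      assert (d <= B) by (unfold B; nra).
      replace (a^2*(1+a)^2*v^2) with (B^2) by (unfold B; ring). nra. }
  assert (T3 : d^2*(1+g) <= a^2*(1+a)^2*(2*(v*g))).
  { apply Rle_trans with (a^2*(1+a)^2*v^2*(1+g)). apply Rmult_le_compat_r; auto.
    rewrite Rmult_assoc. apply Rmult_le_compat_l; auto. nra. }
  assert (T4 : (5/(3*(20*a)))*(d^2*(1+g)) <= (a*(1+a)^2/6)*(v*g)).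
  { apply Rle_trans with ((5/(3*(20*a)))*(a^2*(1+a)^2*(2*(v*g)))).
    apply Rmult_le_compat_l; auto. apply Rdiv_le_0_compat; lra.
    right. field. lra. }
  assert (T5 : d*g + (5/(3*(20*a)))*(d^2*(1+g)) <= -(3/4)*a*(v*g)).
  { assert (a + (1+a)^2/6 <= 1/4) by nra.
    assert (a*(a + (1+a)^2/6)*(v*g) <= a*(1/4)*(v*g)).
    { apply Rmult_le_compat_r; auto. apply Rmult_le_compat_l; lra. }
    nra. }
  replace (x*d*g + (5/(3*(20*a)))*(x*d^2*(1+g))) with (x*(d*g + (5/(3*(20*a)))*(d^2*(1+g)))) by ring.
  replace (-(3/4)*a*(x*v*g)) with (x*(-(3/4)*a*(v*g))) by ring.
  apply Rmult_le_compat_l; auto. Qed.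

Lemma v_props t x i : (i < n)%nat ->
  -1 <= xt t x i <= 1 /\ 0 <= xt t x i * gg x i /\ (xt t x i)^2 * (1 + gg x i) <= 2 * (xt t x i * gg x i).
Proof. intros Hi. assert (Hg := grad_ge x i Hi).
  destruct (xit_cases t x i) as [-> | ->].
  - split; [lra|]. split; nra.
  - destruct (xi_cases x i Hi) as [[_ ->]|[[H1 [H2 ->]]|[H1 ->]]].
    + split; [lra|]. split; nra.
    + split; [lra|]. split; nra.
    + split; [lra|]. split; nra. Qed.

Lemma d_bounds v : -1 <= v <= 1 -> -(al*v) <= exp (- al * v) - 1 <= -(al*v) + al^2*v^2.
Proof. intros Hv. assert (Ha := al_pos). assert (Ha2 := al_le).
  split.
  - assert (H := exp_ineq1_le (- al * v)). lra.
  - assert (H := exp_quad (- al * v) ltac:(nra)). nra. Qed.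

Lemma step_eq t x i : stp t x i = x i * exp (- al * xt t x i).
Proof. reflexivity. Qed.

Definition dd t x i := exp (- al * xt t x i) - 1.

Lemma Ax_step t x j : Ax n A (stp t x) j = Ax n A x j + Ax n A (fun i => x i * dd t x i) j.
Proof. unfold Ax. rewrite <- sumR_plus. apply sumR_ext. intros. rewrite step_eq. unfold dd. ring. Qed.

Lemma pp_step t x j : pp (stp t x) j = pp x j * exp (Ax n A (fun i => x i * dd t x i) j / muv).
Proof. unfold pj at 1. rewrite Ax_step. unfold pj. rewrite <- exp_plus. f_equal. assert (H:=mu_pos). field. lra. Qed.

Lemma XX_step t x : XX (stp t x) = XX x + sumR (fun i => x i * dd t x i) n.
Proof. unfold XX. rewrite <- sumR_plus. apply sumR_ext. intros. rewrite step_eq. unfold dd. ring. Qed.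

Lemma ff_step t x : Inv x ->
  ff (stp t x) <= ff x - (3/4) * al * sumR (fun i => x i * xt t x i * gg x i) n.
Proof. intros HI. assert (HM := bound_M x HI). destruct HI as [Hx Hf].
  assert (Hmu := mu_pos). assert (Ha := al_pos). assert (Ha2 := al_le). assert (Hmua : muv = 20 * al) by (rewrite al_eq; field).
  set (Dl := fun j => Ax n A (fun i => x i * dd t x i) j).
  set (D2 := fun j => Ax n A (fun i => x i * (dd t x i)^2) j).
  assert (Hd : forall i, (i < n)%nat -> -(al * xt t x i) <= dd t x i <= -(al * xt t x i) + al^2 * (xt t x i)^2).
  { intros i Hi. destruct (v_props t x i Hi) as [Hv _]. apply d_bounds; auto. }
  assert (Hdu : forall i, (i < n)%nat -> dd t x i <= 81/80 * al).
  { intros i Hi. destruct (v_props t x i Hi) as [Hv _]. destruct (Hd i Hi).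
    set (v := xt t x i) in *. assert (v^2 <= 1) by nra. assert (-(al*v) <= al) by nra.
    assert (al^2*v^2 <= al^2*1) by (apply Rmult_le_compat_l; nra). assert (al^2 <= al/80) by nra. lra. }
  assert (HD2 : forall j, (j < m)%nat -> 0 <= D2 j).
  { intros j Hj. unfold D2, Ax. apply sumR_nonneg. intros i Hi. apply Rmult_le_pos; [apply HA_nonneg; auto|].
    apply Rmult_le_pos; [left; auto| apply pow2_ge_0]. }
  assert (HDl : forall j, (j < m)%nat -> Dl j / muv <= 1/4).
  { intros j Hj. assert (Hj2 := HM j Hj).
    assert (Dl j <= 81/80 * al * Ax n A x j).
    { unfold Dl, Ax. rewrite <- sumR_scal. apply sumR_le. intros i Hi.
      assert (0 <= A j i * x i) by (apply Rmult_le_pos; [apply HA_nonneg; auto | left; auto]).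
      assert (H5 := Hdu i Hi).
      replace (A j i * (x i * dd t x i)) with ((A j i * x i) * dd t x i) by ring.
      replace (81 / 80 * al * (A j i * x i)) with ((A j i * x i) * (81/80*al)) by ring.
      apply Rmult_le_compat_l; auto. }
    rewrite Hmua. apply Rmult_le_reg_r with (20*al); [lra|]. unfold Rdiv. rewrite Rmult_assoc, Rinv_l by lra.
    assert (0 <= Ax n A x j).
    { unfold Ax. apply sumR_nonneg. intros. apply Rmult_le_pos; [apply HA_nonneg; auto| left; auto]. }
    nra. }
  assert (HCS : forall j, (j < m)%nat -> (Dl j)^2 <= 5/3 * D2 j).
  { intros j Hj. unfold Dl, D2, Ax.
    rewrite (sumR_ext (fun i => A j i * (x i * dd t x i)) (fun i => (A j i * x i) * dd t x i)) by (intros; ring).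
    rewrite (sumR_ext (fun i => A j i * (x i * (dd t x i)^2)) (fun i => (A j i * x i) * (dd t x i)^2)) by (intros; ring).
    eapply Rle_trans. apply CS_sum. intros. apply Rmult_le_pos; [apply HA_nonneg; auto| left; auto].
    apply Rmult_le_compat_r. 
    - apply sumR_nonneg. intros. apply Rmult_le_pos; [apply Rmult_le_pos; [apply HA_nonneg; auto| left; auto]|apply pow2_ge_0].
    - assert (H1 := HM j Hj). unfold Ax in H1. lra. }
  assert (Hrow : forall j, (j < m)%nat -> muv * (pp x j * exp (Dl j / muv) - pp x j) <= pp x j * Dl j + (5/(3*muv)) * (pp x j * D2 j)).
  { intros j Hj. assert (Hp := pp_pos x j). assert (He := exp_quad (Dl j / muv) (HDl j Hj)).
    assert (H1 : muv * (pp x j * exp (Dl j / muv) - pp x j) <= muv * (pp x j * (Dl j / muv + (Dl j / muv)^2))).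
    { apply Rmult_le_compat_l; [lra|]. nra. }
    eapply Rle_trans; [apply H1|].
    replace (muv * (pp x j * (Dl j / muv + (Dl j / muv) ^ 2))) with (pp x j * Dl j + pp x j * (Dl j)^2 / muv) by (field; lra).
    apply Rplus_le_compat_l. 
    replace (5 / (3 * muv) * (pp x j * D2 j)) with (pp x j * (5/3 * D2 j) / muv) by (field; lra).
    unfold Rdiv. apply Rmult_le_compat_r. left; apply Rinv_0_lt_compat; lra. apply Rmult_le_compat_l; [lra|auto]. }
  assert (Hdiff : ff (stp t x) - ff x = - sumR (fun i => x i * dd t x i) n + sumR (fun j => muv * (pp x j * exp (Dl j / muv) - pp x j)) m).
  { unfold ff. rewrite XX_step. unfold PP. rewrite sumR_scal. rewrite sumR_minus.
    rewrite (sumR_ext (pp (stp t x)) (fun j => pp x j * exp (Dl j / muv))) by (intros; apply pp_step). ring. }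
  assert (Hsum : sumR (fun j => muv * (pp x j * exp (Dl j / muv) - pp x j)) m <=
     sumR (fun i => (x i * dd t x i) * (1 + gg x i)) n + (5/(3*muv)) * sumR (fun i => (x i * (dd t x i)^2) * (1 + gg x i)) n).
  { eapply Rle_trans. apply sumR_le. apply Hrow. rewrite sumR_plus, sumR_scal.
    unfold Dl, D2.
    rewrite Ax_swap, Ax_swap. right. f_equal; [|f_equal]; apply sumR_ext; intros i Hi; unfold grad; f_equal; ring. }
  set (c := 5/(3*muv)) in *.
  assert (E : sumR (fun i => x i * dd t x i * gg x i + c * (x i * (dd t x i)^2 * (1 + gg x i))) n =
     - sumR (fun i => x i * dd t x i) n + (sumR (fun i => (x i * dd t x i) * (1 + gg x i)) n + c * sumR (fun i => (x i * (dd t x i)^2) * (1 + gg x i)) n)).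
  { rewrite sumR_plus, sumR_scal.
    assert (sumR (fun i => (x i * dd t x i) * (1 + gg x i)) n = sumR (fun i => x i * dd t x i) n + sumR (fun i => x i * dd t x i * gg x i) n)
      by (rewrite <- sumR_plus; apply sumR_ext; intros; ring).
    lra. }
  assert (Hfin : sumR (fun i => x i * dd t x i * gg x i + c * (x i * (dd t x i)^2 * (1 + gg x i))) n
      <= - (3/4) * al * sumR (fun i => x i * xt t x i * gg x i) n).
  { rewrite <- sumR_scal. apply sumR_le. intros i Hi. unfold c. rewrite Hmua.
    destruct (v_props t x i Hi) as [Hv [Hvg Hv2]]. destruct (Hd i Hi) as [Hd1 Hd2].
    assert (Hg := grad_ge x i Hi).
    replace (- (3 / 4) * al * (x i * xt t x i * gg x i)) with (-(3/4)*al*(x i * xt t x i * gg x i)) by ring.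
    apply coord_ineq; auto; try lra. left; auto. }
  lra. Qed.

Lemma Inv_step t x : Inv x -> Inv (stp t x).
Proof. intros HI. assert (H := ff_step t x HI). destruct HI as [Hx Hf]. split.
  - intros i Hi. rewrite step_eq. apply Rmult_lt_0_compat; [auto|apply exp_pos].
  - assert (0 <= sumR (fun i => x i * xt t x i * gg x i) n).
    { apply sumR_nonneg. intros i Hi. destruct (v_props t x i Hi) as [_ [H2 _]].
      assert (0 < x i) by auto. rewrite Rmult_assoc. apply Rmult_le_pos; lra. }
    assert (Ha := al_pos). nra. Qed.

Lemma Ef_step x : Inv x -> (1 / INR w) * sumR (fun t => ff (stp t x)) w <= ff x - (3 * al / (4 * INR w)) * QQ x.
Proof. intros HI. assert (Hw := w_ge1).
  assert (H1 : sumR (fun t => ff (stp t x)) w <= sumR (fun t => ff x - (3/4) * al * sumR (fun i => x i * xt t x i * gg x i) n) w).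
  { apply sumR_le. intros. apply ff_step; auto. }
  rewrite sumR_minus, sumR_const, sumR_scal, sumR_swap in H1.
  assert (H2 : sumR (fun i => sumR (fun t => x i * xt t x i * gg x i) w) n = QQ x).
  { unfold QQ. apply sumR_ext. intros i Hi.
    rewrite (sum_xit (fun v => x i * v * gg x i) x i Hi). ring. }
  rewrite H2 in H1.
  apply Rmult_le_reg_l with (INR w); [lra|]. rewrite <- Rmult_assoc.
  replace (INR w * (1 / INR w)) with 1 by (field; lra).
  replace (INR w * (ff x - 3 * al / (4 * INR w) * QQ x)) with (INR w * ff x - 3/4 * al * QQ x) by (field; lra). lra. Qed.

Lemma EX_step x : Inv x -> (1 / INR w) * sumR (fun t => XX (stp t x)) w <= XX x - (al / INR w) * (SS x - al * XX x).
Proof. intros [Hx _]. assert (Hw := w_ge1). assert (Ha := al_pos). assert (Ha2 := al_le).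
  assert (H1 : sumR (fun t => XX (stp t x)) w = sumR (fun i => x i * (exp (- al * xx x i) + (INR w - 1) * 1)) n).
  { unfold XX. rewrite sumR_swap. apply sumR_ext. intros i Hi.
    rewrite (sumR_ext _ (fun t => x i * exp (- al * xt t x i))) by (intros; apply step_eq).
    rewrite sumR_scal. f_equal. rewrite (sum_xit (fun v => exp (- al * v)) x i Hi).
    replace (- al * 0) with 0 by ring. rewrite exp_0. auto. }
  assert (H2 : sumR (fun i => x i * (exp (- al * xx x i) + (INR w - 1) * 1)) n <=
               sumR (fun i => INR w * x i - al * (x i * xx x i) + al^2 * x i) n).
  { apply sumR_le. intros i Hi. assert (Hxi := Hx i Hi).
    assert (Hv : -1 <= xx x i <= 1).
    { destruct (xi_ok x i Hi) as [->|[_ H]]. lra. unfold Rabs in H. destruct (Rcase_abs _); lra. }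
    assert (He := exp_quad (- al * xx x i) ltac:(nra)).
    assert (xx x i ^ 2 <= 1) by nra.
    assert (al^2 * xx x i^2 <= al^2 * 1) by (apply Rmult_le_compat_l; nra).
    assert (exp (- al * xx x i) + (INR w - 1) * 1 <= INR w - al * xx x i + al^2) by nra.
    assert (x i * (exp (- al * xx x i) + (INR w - 1) * 1) <= x i * (INR w - al * xx x i + al^2)) by (apply Rmult_le_compat_l; lra).
    nra. }
  rewrite H1. rewrite !sumR_plus, sumR_minus, !sumR_scal in H2. fold (XX x) in H2. fold (SS x) in H2.
  apply Rmult_le_reg_l with (INR w); [lra|]. rewrite <- Rmult_assoc.
  replace (INR w * (1 / INR w)) with 1 by (field; lra).
  replace (INR w * (XX x - al / INR w * (SS x - al * XX x))) with (INR w * XX x - al * SS x + al^2 * XX x) by (field; lra).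
  lra. Qed.

Local Notation iter := (iterate m n A eps).

Lemma iterate_itf ts k : iter ts k = itf _ stp xz ts k.
Proof. induction k; simpl; auto. rewrite IHk. auto. Qed.

Lemma Inv_x0 : Inv xz.
Proof. split. apply x0_pos. apply ff_x0. Qed.

Lemma Inv_iter ts k : Inv (iter ts k).
Proof. rewrite iterate_itf. apply Inv_itf. apply Inv_step. apply Inv_x0. Qed.

Lemma main_sec (T : nat) (HT : INR T >= 6 * INR w / (al * eps)) :
  expect w T (ones_ybar m n A eps T) <= (1 + 5 * eps) * OPT.
Proof.
  assert (Hw1 := w_pos). assert (Hw := w_ge1). assert (Ha := al_pos). assert (Ha2 := al_le).
  assert (HO := OPT_ge1).
  assert (HT0 : 0 < INR T).
  { assert (0 < 6 * INR w / (al * eps)) by (apply Rdiv_lt_0_compat; nra). lra. }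
  assert (Hwa : INR w / al <= INR T * eps / 6).
  { apply Rmult_le_reg_r with (6 / eps). apply Rdiv_lt_0_compat; lra.
    replace (INR T * eps / 6 * (6 / eps)) with (INR T) by (field; lra).
    replace (INR w / al * (6 / eps)) with (6 * INR w / (al * eps)) by (field; lra). lra. }
  set (b := 1 + 4 * eps / 3).
  set (E := fun (F : (nat -> R) -> R) k => expect w T (fun ts => F (iter ts k))).
  assert (Hexp : expect w T (ones_ybar m n A eps T) = (1 / INR T) * sumR (fun k => E PP k) T).
  { unfold ones_ybar. rewrite expect_scal by auto. f_equal.
    rewrite (expect_sum w Hw1 T (fun k ts => PP (iter ts k))). auto. }
  set (SP := sumR (fun k => E PP k) T) in *.
  set (SX := sumR (fun k => E XX k) T).
  set (SS' := sumR (fun k => E SS k) T).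
  set (SQ := sumR (fun k => E QQ k) T).
  assert (H1 : (1 - eps/4) * SP <= (1 + eps) * SX + SS' + SQ + INR T * (eps^2/2)).
  { unfold SP, SX, SS', SQ. rewrite <- sumR_scal, <- sumR_scal, <- sumR_const, <- !sumR_plus.
    apply sumR_le. intros k Hk. unfold E.
    rewrite <- !expect_scal by auto. rewrite <- (expect_const w Hw1 T (eps^2/2)).
    rewrite <- !expect_plus by auto. apply expect_le; auto. intros ts.
    apply main_pointwise. intros i Hi. destruct (Inv_iter ts k) as [Hx _]. left; auto. }
  assert (HEX : forall k, E XX k <= b * OPT).
  { intros k. unfold E. rewrite <- (expect_const w Hw1 T (b * OPT)). apply expect_le; auto.
    intros ts. apply bound_X. apply Inv_iter. }
  assert (HEX0 : forall k, 0 <= E XX k).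
  { intros k. unfold E. rewrite <- (expect_const w Hw1 T 0). apply expect_le; auto.
    intros ts. left. apply XX_pos. apply Inv_iter. }
  assert (H2 : SX <= INR T * (b * OPT)).
  { unfold SX. rewrite <- sumR_const. apply sumR_le. auto. }
  assert (H3 : (3 * al / (4 * INR w)) * SQ <= b * OPT).
  { assert (Ht := telescope w Hw1 _ stp Inv Inv_step ff (fun x => (3 * al / (4 * INR w)) * QQ x) Ef_step xz T T Inv_x0 (le_n T)).
    unfold SQ. rewrite <- sumR_scal.
    assert (Hl : sumR (fun k => 3 * al / (4 * INR w) * E QQ k) T = sumR (fun k => expect w T (fun ts => 3 * al / (4 * INR w) * QQ (itf _ stp xz ts k))) T).
    { apply sumR_ext. intros k _. unfold E. rewrite expect_scal by auto. f_equal. apply expect_ext. intros. rewrite iterate_itf. auto. }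
    rewrite Hl. eapply Rle_trans; [apply Ht|].
    simpl itf at 1. rewrite expect_const by auto. assert (Hf0 := ff_x0).
    assert (- expect w T (fun ts => ff (itf _ stp xz ts T)) <= b * OPT).
    { rewrite <- (expect_const w Hw1 T (b * OPT)). 
      replace (- expect w T (fun ts => ff (itf _ stp xz ts T))) with (expect w T (fun ts => -1 * ff (itf _ stp xz ts T))) by (rewrite expect_scal by auto; ring).
      apply expect_le; auto. intros ts. rewrite <- iterate_itf.
      assert (H := bound_X _ (Inv_iter ts T)). assert (0 <= PP (iter ts T)) by apply PP_nonneg.
      unfold ff. assert (Hm := mu_pos). assert (0 <= muv * PP (iter ts T)) by (apply Rmult_le_pos; lra). unfold b. lra. }
    lra. }
  assert (H4 : (al / INR w) * (SS' - al * SX) <= OPT).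
  { assert (Ht := telescope w Hw1 _ stp Inv Inv_step XX (fun x => (al / INR w) * (SS x - al * XX x)) EX_step xz T T Inv_x0 (le_n T)).
    assert (Hl : (al / INR w) * (SS' - al * SX) = sumR (fun k => expect w T (fun ts => (al / INR w) * (SS (itf _ stp xz ts k) - al * XX (itf _ stp xz ts k)))) T).
    { unfold SS', SX. rewrite <- sumR_scal, <- sumR_minus, <- sumR_scal. apply sumR_ext. intros k _. unfold E.
      rewrite expect_scal, expect_minus, expect_scal by auto.
      rewrite (expect_ext w T (fun ts => SS (iter ts k)) (fun ts => SS (itf _ stp xz ts k))) by (intros; rewrite iterate_itf; auto).
      rewrite (expect_ext w T (fun ts => XX (iter ts k)) (fun ts => XX (itf _ stp xz ts k))) by (intros; rewrite iterate_itf; auto).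
      ring. }
    rewrite Hl. eapply Rle_trans; [apply Ht|].
    simpl itf at 1. rewrite expect_const by auto. assert (H0 := x0_feas).
    assert (0 <= expect w T (fun ts => XX (itf _ stp xz ts T))).
    { assert (H := HEX0 T). unfold E in H. rewrite (expect_ext w T (fun ts => XX (iter ts T)) (fun ts => XX (itf _ stp xz ts T))) in H by (intros; rewrite iterate_itf; auto). auto. }
    lra. }
  set (r := INR w / al) in *.
  assert (Hr : 0 < r) by (unfold r; apply Rdiv_lt_0_compat; lra).
  assert (HbO : 0 <= b * OPT) by (unfold b; nra).
  assert (HSQ : SQ <= 4/3 * r * (b * OPT)).
  { replace (3 * al / (4 * INR w)) with (3 / (4 * r)) in H3 by (unfold r; field; lra).
    apply Rmult_le_reg_l with (3 / (4 * r)). apply Rdiv_lt_0_compat; lra.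
    replace (3 / (4 * r) * (4 / 3 * r * (b * OPT))) with (b * OPT) by (field; lra). lra. }
  assert (HSS : SS' <= r * OPT + al * SX).
  { replace (al / INR w) with (1 / r) in H4 by (unfold r; field; lra).
    assert (SS' - al * SX <= r * OPT).
    { apply Rmult_le_reg_l with (1 / r). apply Rdiv_lt_0_compat; lra.
      replace (1 / r * (r * OPT)) with OPT by (field; lra). lra. }
    lra. }
  assert (Hr2 : r * OPT <= INR T * eps / 6 * OPT) by (apply Rmult_le_compat_r; lra).
  assert (Hr3 : 4/3 * r * (b * OPT) <= 4/3 * (INR T * eps / 6) * (b * OPT)) by (apply Rmult_le_compat_r; lra).
  assert (HaX : al * SX <= al * (INR T * (b * OPT))) by (apply Rmult_le_compat_l; lra).
  assert (HeX : (1 + eps) * SX <= (1 + eps) * (INR T * (b * OPT))) by (apply Rmult_le_compat_l; lra).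
  assert (Hsum : (1 - eps/4) * SP <= INR T * (((1 + eps) * b + al * b + eps / 6 + 2/9 * eps * b) * OPT + eps^2/2)).
  { assert (HH : (1 - eps/4) * SP <= (1 + eps) * (INR T * (b * OPT)) + (INR T * eps / 6 * OPT + al * (INR T * (b * OPT)))
       + 4/3 * (INR T * eps / 6) * (b * OPT) + INR T * (eps^2/2)) by lra.
    eapply Rle_trans; [apply HH|]. lra. }
  assert (Hk : ((1 + eps) * b + al * b + eps / 6 + 2/9 * eps * b) * OPT + eps^2/2 <= (1 - eps/4) * ((1 + 5 * eps) * OPT)).
  { unfold b. assert (eps^2/2 <= eps^2/2 * OPT) by nra.
    assert (Hc : (1 + eps) * (1 + 4*eps/3) + al * (1 + 4*eps/3) + eps/6 + 2/9*eps*(1 + 4*eps/3) + eps^2/2 <= (1 - eps/4) * (1 + 5*eps)).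
    { assert (al * (1 + 4*eps/3) <= eps/40 * (1 + 4*eps/3)) by (apply Rmult_le_compat_r; lra). nra. }
    assert (HcO := Rmult_le_compat_r OPT _ _ ltac:(lra) Hc). nra. }
  rewrite Hexp. apply Rmult_le_reg_l with (INR T * (1 - eps/4)). nra.
  replace (INR T * (1 - eps / 4) * (1 / INR T * SP)) with ((1 - eps/4) * SP) by (field; lra).
  assert (INR T * ((((1 + eps) * b + al * b + eps / 6 + 2/9 * eps * b) * OPT + eps^2/2)) <= INR T * ((1 - eps/4) * ((1 + 5 * eps) * OPT)))
    by (apply Rmult_le_compat_l; lra).
  lra. Qed.

End Main.

Theorem lemma4p1 (m n : nat) (A : nat -> nat -> R) (eps : R)
  (HA_nonneg : forall j i, (j < m)%nat -> (i < n)%nat -> 0 <= A j i)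
  (HA_nozero : forall i, (i < n)%nat -> exists j, (j < m)%nat /\ A j i <> 0)
  (HA_norm_ge : forall i, (i < n)%nat -> 1 <= colnorm m A i)
  (HA_norm_eq : exists i, (i < n)%nat /\ colnorm m A i = 1)
  (Heps : 0 < eps <= 1 / 2)
  (OPT : R) (HOPT : is_lub (lp_values m n A) OPT)
  (T : nat)
  (HT : INR T >= 6 * INR (wpar eps) / (alpha m n eps * eps)) :
  expect (wpar eps) T (ones_ybar m n A eps T) <= (1 + 5 * eps) * OPT.
Proof.
  eapply main_sec; eauto.
Qed.
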